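(* Let $\lambda$ be the smallest cardinal $\kappa$ with $2^\kappa>\mathfrak{c}$. For every free ultrafilter $\mathcal{F}$ on $\mathbb{Z}$ there is a chain $\mathcal{K}\subset\mathcal{L}_0$ with $|\mathcal{K}|=2^\lambda$ such that $\tau[\mathcal{F}]\subset\tau$ for every $\tau\in\mathcal{K}$.
   Context: $\mathfrak{c}=|\mathbb{R}|$. $\eta$ denotes the Euclidean topology on $\mathbb{R}$. $\mathcal{L}$ denotes the family of all Hausdorff topologies $\tau$ on $\mathbb{R}$ with $\tau\subset\eta$. For $\tau\in\mathcal{L}$ and $a\in\mathbb{R}$ let $\mathcal{N}_\tau(a)$ be the neighborhood filter of $a$; let $C(\tau)$ be the set of all $a$ with $\mathcal{N}_\tau(a)\neq\mathcal{N}_\eta(a)$. $\mathcal{L}_0:=\{\tau\in\mathcal{L}\mid C(\tau)\subset\{0\}\}$. For a free ultrafilter $\mathcal{F}$ on $\mathbb{Z}$, $\tau[\mathcal{F}]$ is the topology on $\mathbb{R}$ in which $U\subset\mathbb{R}$ is open iff $U$ is Euclidean open and ($0\notin U$ or $U\cap\mathbb{Z}\in\mathcal{F}$). A chain is a family of topologies totally ordered by inclusion. *)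

(* Defs.v *)
From HB Require Import structures.
From mathcomp Require Import all_boot all_order all_algebra.
From mathcomp Require Import all_classical all_reals all_analysis.
Import Order.TTheory GRing.Theory Num.Theory.
Import numFieldNormedType.Exports.
Local Open Scope classical_set_scope.
Local Open Scope ring_scope.

Definition is_topology (R : realType) (tau : set (set R)) : Prop :=
  tau setT /\
  (forall (I : Type) (U : I -> set R), (forall i, tau (U i)) -> tau (\bigcup_i U i)) /\
  (forall U V, tau U -> tau V -> tau (U `&` V)).

Definition eta_top (R : realType) : set (set R) := [set U : set R | open U].

Definition hausdorff_top (R : realType) (tau : set (set R)) : Prop :=
  forall x y : R, x <> y ->
    exists U V, [/\ tau U, tau V, U x, V y & U `&` V = set0].

Definition LL (R : realType) : set (set (set R)) :=
  [set tau | [/\ is_topology R tau, hausdorff_top R tau & tau `<=` eta_top R]].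

Definition nbhd_filter (R : realType) (tau : set (set R)) (a : R) : set (set R) :=
  [set N | exists U, [/\ tau U, U a & U `<=` N]].

Definition Cset (R : realType) (tau : set (set R)) : set R :=
  [set a | nbhd_filter R tau a <> nbhd_filter R (eta_top R) a].

Definition LL0 (R : realType) : set (set (set R)) :=
  [set tau | LL R tau /\ Cset R tau `<=` [set 0]].

Definition free_ultrafilter (F : set (set int)) : Prop :=
  [/\ F setT /\ ~ F set0,
      (forall A B, F A -> A `<=` B -> F B),
      (forall A B, F A -> F B -> F (A `&` B)),
      (forall A, F A \/ F (~` A)) &
      (forall n : int, ~ F [set n])].

Definition tauF (R : realType) (F : set (set int)) : set (set R) :=
  [set U : set R | open U /\ (~ U 0 \/ F [set z : int | U ((z%:~R) : R)])].

Definition is_chain (T : Type) (K : set (set (set T))) : Prop :=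
  forall t1 t2, K t1 -> K t2 -> t1 `<=` t2 \/ t2 `<=` t1.

Definition powset (T : Type) (A : set T) : set (set T) := [set B | B `<=` A].

(* A has cardinality lambda = the least cardinal kappa with 2^kappa > c = |R| *)
Definition is_lambda (R : realType) (T : Type) (A : set T) : Prop :=
  ~ (card_le (powset T A) [set: R]) /\
  (forall (U : Type) (B : set U),
      card_le B A -> ~ card_le A B -> card_le (powset U B) [set: R]).

(* Main.v *)
Require Import Defs.
From HB Require Import structures.
From mathcomp Require Import all_boot all_order all_algebra.
From mathcomp Require Import all_classical all_reals all_analysis.
From mathcomp Require Import wochoice ring lra zify.
Local Open Scope classical_set_scope.

Module MH.

Local Open Scope classical_set_scope.

Lemma card_le_fun T U (A : set T) (B : set U) (u0 : U) : card_le A B ->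
  exists f : T -> U, (forall x, A x -> B (f x)) /\ (forall x y, A x -> A y -> f x = f y -> x = y).
Proof.
move=> /card_leP[f].
exists (fun x => match pselect (A x) with left h => val (f (SigSub (mem_set h))) | right _ => u0 end).
split.
  by move=> x Ax; case: pselect => // h; exact: set_valP.
move=> x y Ax Ay; case: pselect => // hx; case: pselect => // hy.
move=> /val_inj /(@inj _ _ _ f) => /(_ (in_setT _) (in_setT _)) H.
by have := congr1 val H.
Qed.

Lemma fun_card_le T U (A : set T) (B : set U) (f : T -> U) :
  (forall x, A x -> B (f x)) -> (forall x y, A x -> A y -> f x = f y -> x = y) ->
  card_le A B.
Proof.
move=> fAB finj.
have [g] : $|{injfun A >-> B}|.
  apply/injfunPex; exists f; first by move=> x /fAB.
  by move=> x y /set_mem Ax /set_mem Ay; exact: finj.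
exact: inj_card_le.
Qed.

End MH.

Module MW.
Import MH.
Local Open Scope classical_set_scope.

Definition good T (Lam : set T) (lt : T -> T -> Prop) :=
  [/\ (forall x y, Lam x -> Lam y -> [\/ lt x y, x = y | lt y x]),
      (forall x y, Lam x -> Lam y -> lt x y -> ~ lt y x),
      (forall x y z, Lam x -> Lam y -> Lam z -> lt x y -> lt y z -> lt x z) &
      (forall S, S `<=` Lam -> S !=set0 -> exists m, S m /\ forall y, S y -> ~ lt y m)].

Arguments good {T}.
Lemma good_all T : exists lt : T -> T -> Prop, good setT lt.
Proof.
have [R Rwo] := well_ordering_principle {classic T}.
have Rwc : wo_chain R predT by move=> A _; exact: Rwo.
have Ranti := wo_chain_antisymmetric Rwc.
have Rtot := wo_chainW Rwc.
have Rmin : forall S : set T, S !=set0 -> exists z, S z /\ forall x, S x -> R z x.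
  move=> S [s Ss].
  have [|z [[zA zlb] _]] := Rwo [pred x | `[< S x >]].
    by exists s; rewrite unfold_in /=; apply/asboolP.
  exists z; split; first by move: zA; rewrite unfold_in => /asboolP.
  by move=> x Sx; apply: zlb; rewrite unfold_in; apply/asboolP.
exists (fun x y => R x y /\ x <> y); split.
- move=> x y _ _; have [->|xy] := pselect (x = y); first by constructor 2.
  have := Rtot x y isT isT; case/orP=> h.
    by constructor 1; split.
  by constructor 3; split=> // yx; apply: xy.
- move=> x y _ _ [Rxy xy] [Ryx _]; apply: xy; apply: Ranti => //; exact/andP.
- move=> x y z _ _ _ [Rxy xy] [Ryz yz].
  have Sx : [set x; y; z] x by left; left.
  have Sy : [set x; y; z] y by left; right.
  have Sz : [set x; y; z] z by right.
  have [m [Sm mlb]] := Rmin [set x; y; z] (ex_intro _ x Sx).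
  case: Sm => [[]|] E; rewrite E in mlb.
  + split; first exact: mlb.
    move=> xz; subst z; apply: xy; apply: Ranti => //; exact/andP.
  + by exfalso; apply: xy; apply: Ranti => //; rewrite Rxy mlb.
  + by exfalso; apply: yz; apply: Ranti => //; rewrite Ryz mlb.
- move=> S _ /Rmin[z [Sz zlb]]; exists z; split => // y Sy [Ryz yz].
  by apply: yz; apply: Ranti => //; rewrite Ryz zlb.
Qed.

Lemma good_sub T (A B : set T) lt : good A lt -> B `<=` A -> good B lt.
Proof.
move=> [h1 h2 h3 h4] BA; split.
- by move=> x y /BA Ax /BA Ay; exact: h1.
- by move=> x y /BA Ax /BA Ay; exact: h2.
- by move=> x y z /BA Ax /BA Ay /BA Az; exact: h3.
- by move=> S SB; apply: h4; exact: subset_trans SB BA.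
Qed.

Lemma good_small T (Lam : set T) : Lam !=set0 ->
  exists lt, good Lam lt /\
    forall a, Lam a -> ~ card_le Lam [set b | Lam b /\ lt b a].
Proof.
move=> [t0 Lt0].
have [lt0 [t1 t2 t3 t4]] := good_all T.
pose Bad := [set a | Lam a /\ card_le Lam [set b | Lam b /\ lt0 b a]].
have [[al [[Lal Bal] almin]]|noBad] := pselect (exists al, Bad al /\ forall y, Bad y -> ~ lt0 y al); last first.
  exists lt0; split; first by apply: (@good_sub _ setT).

  move=> a La Ha.
  have BadN : Bad !=set0 by exists a.
  have [m [Bm mmin]] := t4 Bad (fun _ _ => I) BadN.
  by apply: noBad; exists m.
have [g [gI ginj]] := card_le_fun _ _ _ _ t0 Bal.
exists (fun x y => lt0 (g x) (g y)); split.
- split.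
  + move=> x y Lx Ly; case: (t1 (g x) (g y) I I) => h.
    * by constructor 1.
    * by constructor 2; apply: ginj.
    * by constructor 3.
  + by move=> x y _ _; exact: t2.
  + by move=> x y z _ _ _; exact: t3.
  + move=> S SL [s Ss].
    have [m' [[m Sm <-] mmin]] := t4 (g @` S) (fun _ _ => I) (ex_intro _ (g s) (imageP g Ss)).
    by exists m; split => // y Sy; apply: mmin; exact: imageP.
- move=> a La Hc.
  have ga := gI a La; case: ga => Lga ltga.
  apply: (almin (g a)) => //; split => //.
  apply: (card_le_trans Hc).
  apply: (fun_card_le _ _ _ _ g).
    by move=> b [Lb ltb]; split => //; case: (gI b Lb).
  by move=> x y [Lx _] [Ly _]; exact: ginj.
Qed.

End MW.

Module MZ.
Import MH MW.
Local Open Scope classical_set_scope.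

Lemma cantor_nle U (u0 : U) : ~ card_le (powset U setT) [set: U].
Proof.
move=> /(card_le_fun _ _ _ _ u0) [f [_ finj]].
pose D := [set x | exists S, f S = x /\ ~ S x].
have [Dd|nDd] := pselect (D (f D)).
  case: (Dd) => S [fS nS]; apply: nS.
  by rewrite (finj S D (fun _ _ => I) (fun _ _ => I) fS).
by apply: (nDd); exists D; split.
Qed.

Lemma pinj_card_le T U (A : set T) (B : set U) (M : set (T * U)) :
  (forall p, M p -> B p.2) ->
  (forall p q, M p -> M q -> p.1 = q.1 -> p.2 = q.2) ->
  (forall p q, M p -> M q -> p.2 = q.2 -> p.1 = q.1) ->
  (forall x, A x -> exists y, M (x, y)) -> card_le A B.
Proof.
move=> MB Mf Mi Adom.
case: (pselect (A !=set0)) => [[a Aa]|nA]; last first.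
  have -> : A = set0 by apply/seteqP; split => x // Ax; apply: nA; exists x.
  exact: card_ge0.
have [u0 _] := Adom a Aa.
pose f x := match pselect (exists y, M (x, y)) with left h => projT1 (cid h) | right _ => u0 end.
have fM x : A x -> M (x, f x).
  move=> Ax; rewrite /f; case: pselect => [h|]; last by move/(_ (Adom x Ax)).
  by case: (cid h).
apply: (fun_card_le _ _ _ _ f).
  by move=> x /fM /MB.
by move=> x y Ax Ay fxy; exact: (Mi _ _ (fM x Ax) (fM y Ay) fxy).
Qed.

Lemma card_comparable T U (A : set T) (B : set U) : card_le A B \/ card_le B A.
Proof.
pose P := [set M : set (T * U) | [/\ (forall p, M p -> A p.1 /\ B p.2),
   (forall p q, M p -> M q -> p.1 = q.1 -> p.2 = q.2) &
   (forall p q, M p -> M q -> p.2 = q.2 -> p.1 = q.1)]].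
have [M [[MAB Mf Mi] Mmax]] : exists M, P M /\ forall N, M `<` N -> ~ P N.
  apply: Zorn_bigcup => C CP Ctot; split.
  - by move=> p [X CX Xp]; case: (CP X CX) => + _ _; apply.
  - move=> p q [X CX Xp] [Y CY Yq].
    case: (Ctot X Y CX CY) => XY.
      by case: (CP Y CY) => _ + _; apply => //; exact: XY.
    by case: (CP X CX) => _ + _; apply => //; exact: XY.
  - move=> p q [X CX Xp] [Y CY Yq].
    case: (Ctot X Y CX CY) => XY.
      by case: (CP Y CY) => _ _; apply => //; exact: XY.
    by case: (CP X CX) => _ _; apply => //; exact: XY.
have [Adom|] := pselect (forall x, A x -> exists y, M (x, y)).
  left; apply: (pinj_card_le _ _ _ _ M) => //.
  by move=> p /MAB[].
move=> /existsNP[x0 /not_implyP[Ax0 nx0]].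
have [Bdom|] := pselect (forall y, B y -> exists x, M (x, y)).
  right; apply: (pinj_card_le _ _ _ _ [set p | M (p.2, p.1)]).
  - by move=> p /MAB[].
  - by move=> p q Mp Mq /= e; exact: (Mi _ _ Mp Mq).
  - by move=> p q Mp Mq /= e; exact: (Mf _ _ Mp Mq).
  - by move=> y /Bdom[x Mxy]; exists x.
move=> /existsNP[y0 /not_implyP[By0 ny0]].
have HM := Mmax (M `|` [set (x0, y0)]).
have H1 : M `<` (M `|` [set (x0, y0)]).
  split; first by move=> p Mp; left.
  move=> /(_ (x0, y0) (or_intror erefl)) Mxy.
  by apply: nx0; exists y0.
case: (HM H1); split.
- by move=> p [/MAB //|->].
- move=> p q [Mp|->] [Mq|->] //=.
  + exact: Mf.
  + by move=> e; exfalso; apply: nx0; exists p.2; rewrite -e; case: p Mp {e}.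
  + by move=> e; exfalso; apply: nx0; exists q.2; rewrite e; case: q Mq {e}.
- move=> p q [Mp|->] [Mq|->] //=.
  + exact: Mi.
  + by move=> e; exfalso; apply: ny0; exists p.1; rewrite -e; case: p Mp {e}.
  + by move=> e; exfalso; apply: ny0; exists q.1; rewrite e; case: q Mq {e}.
Qed.

Lemma lam_le_R (R : realType) T (Lam : set T) : is_lambda R T Lam -> card_le Lam [set: R].
Proof.
move=> [_ Hl].
have [//|nle] := pselect (card_le Lam [set: R]).
have [h|RL] := card_comparable _ _ Lam [set: R]; first by case: nle.
have := Hl R [set: R] RL nle.
move=> h; exfalso; exact: (cantor_nle R 0%R h).
Qed.

End MZ.

Module ML.
Import MH MW MZ.
Local Open Scope classical_set_scope.
Local Set Implicit Arguments.
Local Unset Strict Implicit.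

Section Lex.
Variables (T : Type) (Lam : set T) (lt : T -> T -> Prop).
Hypothesis G : good Lam lt.

Definition agree (A B : set T) a := forall b, Lam b -> lt b a -> (A b <-> B b).
Definition lexlt (A B : set T) := exists a, [/\ Lam a, B a, ~ A a & agree A B a].
Definition lexeq (A B : set T) := forall b, Lam b -> (A b <-> B b).
Definition lexle A B := lexlt A B \/ lexeq A B.

Lemma lex_min A B : ~ lexeq A B ->
  exists m, [/\ Lam m, ~ (A m <-> B m) & agree A B m].
Proof.
case: G => _ _ _ gmin nAB.
have : [set b | Lam b /\ ~ (A b <-> B b)] !=set0.
  apply: contra_notP nAB => /forallNP h b Lb.
  have /not_andP[//|] := h b.
  by move/contra_notP; apply.
move=> /(gmin _ (fun b (h : _ /\ _) => h.1)) [m [[Lm nm] mmin]].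
exists m; split => // b Lb ltbm.
have [//|nb] := pselect (A b <-> B b).
by exfalso; exact: (mmin b (conj Lb nb) ltbm).
Qed.

Lemma lex_total A B : lexle A B \/ lexle B A.
Proof.
have [e|ne] := pselect (lexeq A B); first by left; right.
have [m [Lm nm ag]] := lex_min ne.
have [Am|nAm] := pselect (A m).
  have nBm : ~ B m by move=> Bm; apply: nm; split.
  right; left; exists m; split => // b Lb lbm; apply: iff_sym; exact: ag.
have Bm : B m by apply: contra_notP nm => nBm; split.
by left; left; exists m; split.
Qed.

Lemma lexlt_trans A B C : lexlt A B -> lexlt B C -> lexlt A C.
Proof.
case: G => tri asy tra _.
move=> [a [La Ba nAa agAB]] [c [Lc Cc nBc agBC]].
case: (tri a c La Lc) => [ac|ac|ca].
- exists a; split => //; first by apply/(agBC a La ac).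
  move=> b Lb ba; apply: iff_trans (agAB b Lb ba) _.
  by apply: agBC => //; exact: (tra b a c).
- by subst c.
- exists c; split => //; first by move=> Ac; apply: nBc; apply/(agAB c Lc ca).
  move=> b Lb bc; apply: iff_trans (agBC b Lb bc).
  by apply: agAB => //; exact: (tra b c a).
Qed.

Lemma lexlt_eqr A B C : lexlt A B -> lexeq B C -> lexlt A C.
Proof.
move=> [a [La Ba nAa agAB]] e; exists a; split => //; first by apply/(e a La).
by move=> b Lb ba; apply: iff_trans (agAB b Lb ba) (e b Lb).
Qed.

Lemma lexlt_eql A B C : lexeq A B -> lexlt B C -> lexlt A C.
Proof.
move=> e [a [La Ca nBa agBC]]; exists a; split => //; first by move/(e a La).
by move=> b Lb ba; apply: iff_trans (e b Lb) (agBC b Lb ba).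
Qed.

Lemma lexle_trans A B C : lexle A B -> lexle B C -> lexle A C.
Proof.
move=> [ab|ab] [bc|bc].
- by left; exact: lexlt_trans ab bc.
- by left; exact: lexlt_eqr ab bc.
- by left; exact: lexlt_eql ab bc.
- by right => b Lb; apply: iff_trans (ab b Lb) (bc b Lb).
Qed.

Lemma lex_sub A B : (forall b, Lam b -> A b -> B b) -> lexle A B.
Proof.
move=> sAB; have [e|ne] := pselect (lexeq A B); first by right.
have [m [Lm nm ag]] := lex_min ne.
left; exists m; split => //.
- have [//|nBm] := pselect (B m); exfalso; apply: (nm); split.
    exact: sAB.
  by move=> /nBm.
- by move=> Am; apply: (nm); split => // _; exact: sAB.
Qed.

Definition tset (s : set T) a := s `|` [set a].

Lemma lex_key A B a : Lam a -> B a -> ~ A a -> agree A B a ->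
  lexle (tset [set b | A b /\ Lam b /\ lt b a] a) B /\
  ~ lexle (tset [set b | A b /\ Lam b /\ lt b a] a) A.
Proof.
case: G => tri asy tra _.
move=> La Ba nAa ag; split.
  apply: lex_sub => b Lb [[Ab [_ ba]]|->] //.
  by apply/(ag b Lb ba).
move=> [[c [Lc Ac ntc agc]]|e].
  case: (tri c a Lc La) => [ca|ca|ac].
  - by apply: ntc; left.
  - by subst c.
  - by apply: nAa; apply/(agc a La ac); right.
by apply: nAa; apply/(e a La); right.
Qed.

End Lex.

End ML.

Module MS.
Import MH MW MZ ML.
Import Order.TTheory GRing.Theory Num.Theory.
Local Open Scope classical_set_scope.
Local Open Scope ring_scope.

Section Sep.
Variable R : realType.

Lemma rat_between (x y : R) : x < y -> exists q : rat, x < ratr q /\ ratr q < y.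
Proof. by move=> /rat_in_itvoo[q]; rewrite in_itv /= => /andP[h1 h2]; exists q. Qed.

Lemma shrink (a b : rat) (x y : R) : ratr a < x -> x < ratr b -> y <> x ->
  exists a' b' : rat, [/\ ratr a <= ratr a' :> R, ratr a' < x, x < ratr b',
     ratr b' <= ratr b :> R & ~ (ratr a' < y /\ y < ratr b')].
Proof.
move=> ax xb yx.
have [ylx|xly] : y < x \/ x < y.
  by case: (ltgtP y x) => h; [left|right|exfalso; apply: yx].


- have [a' [h1 h2]] := rat_between (Num.max (ratr a) y) x
    ltac:(by rewrite gt_max ax ylx).
  move: h1; rewrite gt_max => /andP[h1 h3].
  exists a', b; split => //; first exact: ltW.
  by case=> h; move: h3; rewrite ltNge (ltW h).
- have [b' [h1 h2]] := rat_between x (Num.min (ratr b) y)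
    ltac:(by rewrite lt_min xb xly).
  move: h2; rewrite lt_min => /andP[h2 h3].
  exists a, b'; split => //; first exact: ltW.
  by case=> _ h; move: h3; rewrite ltNge (ltW h).
Qed.

Definition inbox (q : (rat * rat) * (rat * rat)) (v : R * R) :=
  [/\ ratr q.1.1 < v.1, v.1 < ratr q.1.2, ratr q.2.1 < v.2 & v.2 < ratr q.2.2].

Lemma box_sep (v : R * R) (ws : seq (R * R)) : v \notin ws ->
  exists q, inbox q v /\ forall w, w \in ws -> ~ inbox q w.
Proof.
elim: ws => [_|w ws IH].
  have [a [a1 a2]] := rat_between (v.1 - 1) v.1 ltac:(lra).
  have [b [b1 b2]] := rat_between v.1 (v.1 + 1) ltac:(lra).
  have [c [c1 c2]] := rat_between (v.2 - 1) v.2 ltac:(lra).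
  have [e [e1 e2]] := rat_between v.2 (v.2 + 1) ltac:(lra).
  by exists ((a, b), (c, e)); split.
rewrite in_cons negb_or => /andP[vw /IH[[[a b] [c e]] [[/= h1 h2 h3 h4] hws]]].
have [w1|w2] : w.1 <> v.1 \/ w.2 <> v.2.
  case: v w vw {IH hws h1 h2 h3 h4} => v1 v2 [w1 w2] /=.
  have [->|] := pselect (w1 = v1); last by left.
  have [->|] := pselect (w2 = v2); last by right.
  by rewrite eqxx.
- have [a' [b' [s1 s2 s3 s4 s5]]] := shrink _ _ _ _ h1 h2 w1.
  exists ((a', b'), (c, e)); split; first by split.
  move=> u; rewrite in_cons => /orP[/eqP ->|uws] [/= u1 u2 u3 u4].
    by apply: s5.
  apply: (hws u uws); split => //=.
    exact: le_lt_trans s1 u1.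
  exact: lt_le_trans u2 s4.
- have [c' [e' [s1 s2 s3 s4 s5]]] := shrink _ _ _ _ h3 h4 w2.
  exists ((a, b), (c', e')); split; first by split.
  move=> u; rewrite in_cons => /orP[/eqP ->|uws] [/= u1 u2 u3 u4].
    by apply: s5.
  apply: (hws u uws); split => //=.
    exact: le_lt_trans s1 u3.
  exact: lt_le_trans u4 s4.
Qed.

Definition Iset (v : R * R) : set nat := [set n |
  match unpickle n : option (nat * ((rat * rat) * (rat * rat))) with
  | Some p => ~ inbox p.2 v | None => True end].

Lemma indep (v : R * R) (ws : seq (R * R)) N : v \notin ws ->
  exists n, (N <= n)%N /\ (forall w, w \in ws -> Iset w n) /\ ~ Iset v n.
Proof.
move=> /box_sep[q [qv qws]].
have finj : injective (fun k : nat => pickle (k, q)).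
  by move=> k1 k2 /(pcan_inj (@pickleK _)) [].
have [k kN] := injective_gtn finj N.
exists (pickle (k, q)); split; first exact: ltnW.
rewrite /Iset /= pickleK /=; split => //.
Qed.

End Sep.

End MS.

Module MP.
Import MH MW MZ ML MS.
Import Order.TTheory GRing.Theory Num.Theory.
Local Open Scope classical_set_scope.
Local Open Scope ring_scope.

Section Pts.
Variable R : realType.

Definition ip (n : nat) : R := (n.+2%:R)^-1.
Definition pt (z : int) (n : nat) : R := z%:~R + ip n.
Definition rho (m : nat) : R := (m.+2%:R * m.+3%:R)^-1.

Lemma ip_gt0 n : 0 < ip n.
Proof. by rewrite /ip invr_gt0 ltr0n. Qed.

Lemma ip_le n : 2 * ip n <= 1.
Proof.
by rewrite /ip ler_pdivrMr ?ltr0n // mul1r (ler_nat R 2).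
Qed.

Lemma rho_gt0 m : 0 < rho m.
Proof. by rewrite /rho invr_gt0 mulr_gt0 ?ltr0n. Qed.

Lemma rho_le m : 4 * rho m <= 1.
Proof.
rewrite /rho.
have h2 : (2 : R) <= m.+2%:R by rewrite (ler_nat R 2).
have h3 : (2 : R) <= m.+3%:R by rewrite (ler_nat R 2).
rewrite ler_pdivrMr; last nra.
nra.
Qed.

Lemma ip_sep n m : n <> m -> rho m <= `|ip n - ip m|.
Proof.
move=> nm; rewrite /rho /ip.
set r := n.+2%:R : R; set s := m.+2%:R : R.
have -> : m.+3%:R = s + 1 by rewrite /s natr1.
have r2 : 2 <= r by rewrite /r (ler_nat R 2).
have s2 : 2 <= s by rewrite /s (ler_nat R 2).
have [lnm|lmn] : (n < m)%N \/ (m < n)%N.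
  by case: (ltngtP n m) => h; [left|right|].
- have rs : r + 1 <= s by rewrite /r /s natr1 ler_nat.
  have -> : r^-1 - s^-1 = (s - r) / (r * s) by field; apply/andP; split; apply/eqP; lra.
  rewrite ger0_norm; last by apply: divr_ge0; [lra|nra].
  rewrite ler_pdivlMr; last nra.
  rewrite mulrC ler_pdivrMr; last nra.
  nra.
- have rs : s + 1 <= r by rewrite /r /s natr1 ler_nat.
  have -> : r^-1 - s^-1 = - ((r - s) / (r * s)) by field; apply/andP; split; apply/eqP; lra.
  rewrite normrN ger0_norm; last by apply: divr_ge0; [lra|nra].
  rewrite ler_pdivlMr; last nra.
  rewrite mulrC ler_pdivrMr; last nra.
  nra.
Qed.

End Pts.

End MP.

Module MTop.
Import MH MW MZ ML MS MP.
Import Order.TTheory GRing.Theory Num.Theory.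
Import numFieldNormedType.Exports.
Local Open Scope classical_set_scope.
Local Open Scope ring_scope.
Local Set Implicit Arguments.
Local Unset Strict Implicit.

Section Top.
Variable R : realType.
Variable F : set (set int).
Hypothesis HF : free_ultrafilter F.

Lemma F_up A B : F A -> A `<=` B -> F B.
Proof. by case: HF => _ h _ _ _; exact: h. Qed.
Lemma F_I A B : F A -> F B -> F (A `&` B).
Proof. by case: HF => _ _ h _ _; exact: h. Qed.
Lemma F_T : F setT.
Proof. by case: HF => -[]. Qed.
Lemma F_0 : ~ F set0.
Proof. by case: HF => -[]. Qed.
Lemma F_free z : ~ F [set z].
Proof. by case: HF. Qed.
Lemma F_ult A : F A \/ F (~` A).
Proof. by case: HF. Qed.

Lemma F_sub1 (S : set int) : (forall z1 z2, S z1 -> S z2 -> z1 = z2) -> ~ F S.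
Proof.
move=> h FS; have [[z0 Sz0]|] := pselect (S !=set0).
  case: (@F_free z0); apply: (@F_up S _ FS) => z Sz; exact: h.
move=> nS; case: F_0; apply: (@F_up S _ FS) => z Sz; case: nS; by exists z.
Qed.

Lemma F_co1 (S : set int) : (forall z1 z2, ~ S z1 -> ~ S z2 -> z1 = z2) -> F S.
Proof.
move=> h; case: (F_ult S) => // /F_sub1; case => z1 z2 /= n1 n2; exact: h.
Qed.

Lemma tail_open (U : set R) (x : R) : open U -> U x ->
  exists N, forall n, (N <= n)%N -> U (x + ip R n).
Proof.
move=> oU Ux.
have [e /= e0 sub] := open_nbhs_nbhs (conj oU Ux).
exists (Num.truncn (e^-1)) => n Nn; apply: sub => /=.
rewrite opprD addrA subrr add0r normrN ger0_norm; last exact: ltW (ip_gt0 R n).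
rewrite /ip -[e]invrK ltf_pV2 ?posrE ?invr_gt0 ?ltr0n //.
apply: (lt_le_trans (truncnS_gt _)); rewrite ler_nat ltnS; exact: leqW.
Qed.

Definition Kz (z : int) (U : set R) : set nat := [set n | U (pt R z n)].

Definition nicef (Uf : set (set nat)) :=
  [/\ Uf setT, (forall A B, Uf A -> A `<=` B -> Uf B),
      (forall A B, Uf A -> Uf B -> Uf (A `&` B)) &
      (forall N, Uf [set n | (N <= n)%N])].

Definition tauU (Uf : set (set nat)) : set (set R) :=
  [set U | open U /\ (~ U 0 \/ F [set z : int | Uf (Kz z U)])].

Lemma tauU_top Uf : nicef Uf -> is_topology R (tauU Uf).
Proof.
case=> UT Uup UI _; split; [|split].
- split; first exact: openT.
  right; apply: (@F_up setT) F_T _ => z _; apply: Uup UT _ => n _ //.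
- move=> I U hU; split.
    by apply: bigcup_open => i _; case: (hU i).
  have [[i _ Ui0]|n0] := pselect ((\bigcup_i U i) 0); last by left.
  right; case: (hU i) => _ [//|FU].
  apply: (F_up FU) => z /= h; apply: Uup h _ => n Un; by exists i.
- move=> U V [oU hU] [oV hV]; split; first exact: openI.
  have [[U0 V0]|n0] := pselect ((U `&` V) 0); last by left.
  case: hU => [//|FU]; case: hV => [//|FV].
  right; apply: (F_up (F_I FU FV)) => z [/= h1 h2].
  by apply: Uup (UI _ _ h1 h2) _ => n.
Qed.

Lemma tauF_sub Uf : nicef Uf -> tauF R F `<=` tauU Uf.
Proof.
case=> _ Uup _ Utail U [oU [n0|FU]]; split => //; first by left.
right; apply: (F_up FU) => z /= Uz.
have [N hN] := tail_open oU Uz.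
by apply: Uup (Utail N) _ => n /hN.
Qed.

Lemma tauU_eta Uf : tauU Uf `<=` eta_top R.
Proof. by move=> U []. Qed.

Lemma tauU_mono Uf Uf' : Uf `<=` Uf' -> tauU Uf `<=` tauU Uf'.
Proof.
move=> s U [oU [h|h]]; split => //; [by left|right].
by apply: (F_up h) => z /s.
Qed.

Lemma int_close (z1 z2 : int) : `|z1%:~R - z2%:~R : R| < 1 -> z1 = z2.
Proof.
move=> h; have [//|ne] := pselect (z1 = z2); exfalso.
have := @norm_intr_ge1 _ ((z1 - z2)%:~R : R) (intr_int _ _).
rewrite intr_eq0 subr_eq0 intrB.
have -> : (z1 == z2) = false by apply/negbTE/eqP.
move=> /(_ isT); lra.
Qed.

Lemma ballE (x e t : R) : ball x e t = (`|x - t| < e).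
Proof. by rewrite -ball_normE. Qed.

Lemma tauU_C Uf : Cset R (tauU Uf) `<=` [set 0].
Proof.
move=> a Ca; have [//|a0] := pselect (a = 0); exfalso; apply: Ca.
apply/seteqP; split => N [U [hU Ua sub]].
  by exists U; split => //; case: hU.
exists (U `&` [set x | x != 0]); split => //.
- split; first by apply: openI => //; exact: open_neq.
  by left => -[_ /=]; rewrite eqxx.
- by split => //=; apply/eqP.
- by move=> t [/sub].
Qed.

Lemma haus_mono (A B : set (set R)) : hausdorff_top R A -> A `<=` B -> hausdorff_top R B.
Proof.
move=> hA AB x y xy; have [U [V [hU hV Ux Vy UV]]] := hA x y xy.
by exists U, V; split => //; apply: AB.
Qed.

Lemma haus0 (y : R) : y <> 0 -> exists U V,
  [/\ tauF R F U, tauF R F V, U 0, V y & U `&` V = set0].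
Proof.
move=> y0; have ay : 0 < `|y| by rewrite normr_gt0; apply/eqP.
pose r := Num.min (`|y| / 2) (4^-1).
have r0 : 0 < r by rewrite lt_min; apply/andP; split; lra.
have r1 : r <= `|y| / 2 by rewrite ge_min lexx.
have r2 : r <= 4^-1 by rewrite ge_min lexx orbT.
have cbE : closed_ball y r = [set t | `|y - t| <= r].
  by rewrite closed_ballE.
exists (~` closed_ball y r), (ball y r); split.
- split; first by rewrite openC; exact: closed_ball_closed.
  right; apply: F_co1 => z1 z2; rewrite cbE /= => /negP/negPn h1 /negP/negPn h2.
  apply: int_close.
  have := ler_distD y (z1%:~R : R) z2%:~R; rewrite (distrC (z1%:~R : R) y); lra.
- split; first exact: ball_open.
  by left; rewrite ballE subr0; lra.
- by rewrite cbE /= subr0; lra.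
- by rewrite ballE subrr normr0.
- apply/seteqP; split => // t [/=]; rewrite cbE ballE /=; lra.
Qed.

Lemma haus2 (x y : R) : x <> 0 -> y <> 0 -> x <> y -> exists U V,
  [/\ tauF R F U, tauF R F V, U x, V y & U `&` V = set0].
Proof.
move=> x0 y0 xy.
have ax : 0 < `|x| by rewrite normr_gt0; apply/eqP.
have ay : 0 < `|y| by rewrite normr_gt0; apply/eqP.
have axy : 0 < `|x - y| by rewrite normr_gt0 subr_eq0; apply/eqP.
pose r := Num.min (Num.min `|x| `|y|) `|x - y| / 2.
have r0 : 0 < r by rewrite divr_gt0 // !lt_min ax ay axy.
have r1 : 2 * r <= `|x| by rewrite /r mulrC divfK ?ge_min ?lexx //; lra.
have r2 : 2 * r <= `|y| by rewrite /r mulrC divfK ?ge_min ?lexx ?orbT //; lra.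
have r3 : 2 * r <= `|x - y| by rewrite /r mulrC divfK ?ge_min ?lexx ?orbT //; lra.
exists (ball x r), (ball y r); split.
- by split; [exact: ball_open|left; rewrite ballE subr0; lra].
- by split; [exact: ball_open|left; rewrite ballE subr0; lra].
- by rewrite ballE subrr normr0.
- by rewrite ballE subrr normr0.
- apply/seteqP; split => // t [/=]; rewrite !ballE => h1 h2.
  have := ler_distD t x y; rewrite (distrC t y); lra.
Qed.

Lemma tauF_haus : hausdorff_top R (tauF R F).
Proof.
move=> x y xy.
have [x0|x0] := pselect (x = 0).
  have y0 : y <> 0 by move=> y0; apply: xy; rewrite x0 y0.
  by rewrite x0; exact: haus0.
have [y0|y0] := pselect (y = 0).
  have [U [V [hU hV U0 Vx UV]]] := haus0 x0.
  by exists V, U; split => //; rewrite ?y0 // setIC.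
exact: haus2.
Qed.

Lemma int_ge1 (z : int) : z <> 0 -> 1 <= (z%:~R : R) \/ (z%:~R : R) <= -1.
Proof.
move=> z0; have := @norm_intr_ge1 _ (z%:~R : R) (intr_int _ _).
rewrite intr_eq0 => /(_ (introT negP (fun h => z0 (eqP h)))).
by rewrite ler_normr => /orP[h|h]; [left|right; lra].
Qed.

Definition Ubig (M : set nat) : set R :=
  ball 0 2^-1 `|` \bigcup_(p in [set p : int * nat | M p.2]) ball (pt R p.1 p.2) (rho R p.2).

Lemma Ubig_open M : open (Ubig M).
Proof.
apply: openU; first exact: ball_open.
by apply: bigcup_open => p _; exact: ball_open.
Qed.

Lemma Ubig0 M : Ubig M 0.
Proof. by left; rewrite ballE subrr normr0. Qed.

Lemma KzE M (z : int) : z <> 0 -> Kz z (Ubig M) = M.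
Proof.
move=> z0; apply/seteqP; split => n /=; last first.
  move=> Mn; right; exists (z, n) => //=.
  by rewrite ballE subrr normr0; exact: rho_gt0.
have ipn := ip_gt0 R n; have ipn2 := ip_le R n.
have h22 : (2^-1 : R) * 2 = 1 by rewrite mulVf.
case.
  rewrite ballE /pt sub0r normrN ltr_norml => /andP[h1 h2].
  case: (int_ge1 z0) => h; exfalso; move: h1 h2 h ipn ipn2; generalize (ip R n) => t; generalize (z%:~R : R) => w; clear; move=> h1 h2 h ipn ipn2; lra.
move=> [[z' m] /= Mm]; rewrite ballE /pt => h.
have [zz|zz] := pselect (z' = z).
  subst z'; have [nm|nm] := pselect (n = m); first by rewrite nm.
  have := @ip_sep R n m nm; move: h.
  rewrite opprD addrACA subrr add0r distrC => h1 h2; exfalso.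
  by have := lt_le_trans h1 h2; rewrite ltxx.
have zz0 : z' - z <> 0 by move=> /eqP; rewrite subr_eq0 => /eqP.
have ipm := ip_gt0 R m; have ipm2 := ip_le R m; have rm := rho_le R m.
move: h; rewrite ltr_norml => /andP[h1 h2].
case: (int_ge1 zz0); rewrite intrB => h; exfalso;
  move: h h1 h2 ipm ipm2 rm ipn ipn2; generalize (ip R n) (ip R m) (rho R m) (z%:~R : R) (z'%:~R : R);
  clear => a b c d e; lra.
Qed.

Lemma tauU_strict Uf Uf' M : nicef Uf -> Uf' M -> ~ Uf M ->
  tauU Uf' (Ubig M) /\ ~ tauU Uf (Ubig M).
Proof.
move=> _ UM nUM; split.
  split; first exact: Ubig_open.
  right; apply: F_co1 => z1 z2 h1 h2.
  have [e1|n1] := pselect (z1 = 0); have [e2|n2] := pselect (z2 = 0).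
  - by rewrite e1 e2.
  - by exfalso; apply: h2; rewrite /= KzE.
  - by exfalso; apply: h1; rewrite /= KzE.
  - by exfalso; apply: h1; rewrite /= KzE.
move=> [_ [|FU]]; first by case; exact: Ubig0.
apply: (F_sub1 _ FU) => z1 z2 /= h1 h2.
have [e1|n1] := pselect (z1 = 0); have [e2|n2] := pselect (z2 = 0).
- by rewrite e1 e2.
- by exfalso; move: h2; rewrite KzE.
- by exfalso; move: h1; rewrite KzE.
- by exfalso; move: h1; rewrite KzE.
Qed.

Lemma tauU_LL0 Uf : nicef Uf -> LL0 R (tauU Uf).
Proof.
move=> nU; split; last exact: tauU_C.
split; [exact: tauU_top|exact: haus_mono tauF_haus (tauF_sub nU)|exact: tauU_eta].
Qed.

End Top.

End MTop.

Module MFi.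
Import MH MW MZ ML MS MP MTop.
Import Order.TTheory GRing.Theory Num.Theory.
Local Open Scope classical_set_scope.

Section Fi.
Variable R : realType.

Definition UfC (C : set (R * R)) : set (set nat) :=
  [set M | exists N (ws : seq (R * R)), (forall w, w \in ws -> C w) /\
     forall n, (N <= n)%N -> (forall w, w \in ws -> @Iset R w n) -> M n].

Lemma UfC_nice C : nicef (UfC C).
Proof.
split.
- by exists 0%N, [::]; split.
- move=> A B [N [ws [h1 h2]]] AB; exists N, ws; split => // n Nn hw.
  exact/AB/h2.
- move=> A B [N1 [ws1 [h1 h2]]] [N2 [ws2 [h3 h4]]].
  exists (maxn N1 N2), (ws1 ++ ws2); split.
    by move=> w; rewrite mem_cat => /orP[/h1|/h3].
  move=> n; rewrite geq_max => /andP[n1 n2] hw; split.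
    by apply: h2 => // w ww; apply: hw; rewrite mem_cat ww.
  by apply: h4 => // w ww; apply: hw; rewrite mem_cat ww orbT.
- by move=> N; exists N, [::]; split.
Qed.

Lemma UfC_mono C C' : C `<=` C' -> UfC C `<=` UfC C'.
Proof.
move=> s M [N [ws [h1 h2]]]; exists N, ws; split => // w /h1; exact: s.
Qed.

Lemma UfC_strict C C' v : C' v -> ~ C v -> UfC C' (@Iset R v) /\ ~ UfC C (@Iset R v).
Proof.
move=> C'v nCv; split.
  exists 0%N, [:: v]; split; first by move=> w; rewrite inE => /eqP ->.
  by move=> n _; apply; rewrite inE.
move=> [N [ws [h1 h2]]].
have vws : v \notin ws by apply/negP => /h1.
have [n [Nn [hw nv]]] := @indep R v ws N vws.
by apply: nv; apply: h2.
Qed.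

End Fi.

End MFi.

Import MH MW MZ ML MS MP MTop MFi.


Theorem theorem9 (R : realType) (T : Type) (Lam : set T) (F : set (set int)) :
  is_lambda R T Lam -> free_ultrafilter F ->
  exists K : set (set (set R)),
    [/\ is_chain R K, K `<=` LL0 R, card_eq K (powset T Lam) &
        forall tau, K tau -> tauF R F `<=` tau].
Proof.
move=> hl HF; case: (hl) => hl1 hl2.
have LamN : Lam !=set0.
  apply: contra_notP hl1 => nL.
  apply: (fun_card_le _ _ _ _ (fun _ => 0%R)) => // s t ps pt _.
  have e0 : forall u, powset T Lam u -> u = set0.
    move=> u pu; apply/seteqP; split => x // /pu Lx; case: nL; by exists x.
  by rewrite (e0 s ps) (e0 t pt).
have [lt [G small]] := good_small _ _ LamN.
pose I a := [set b | Lam b /\ lt b a].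
have eex : forall a, exists e : set T -> R, Lam a -> forall s t,
    powset T (I a) s -> powset T (I a) t -> e s = e t -> s = t.
  move=> a; have [La|nLa] := pselect (Lam a); last by exists (fun _ => 0%R).
  have := hl2 T (I a) (subset_card_le (fun b (h : I a b) => h.1)) (small a La).
  move/(card_le_fun _ _ _ _ 0%R) => [e [_ einj]]; exists e => _; exact: einj.
have [e he] := choice eex.
have [io [_ ioinj]] := card_le_fun _ _ _ _ 0%R (lam_le_R _ _ _ hl).
pose D := [set d : T * set T | Lam d.1 /\ (forall b, d.2 b -> Lam b /\ lt b d.1)].
pose code (d : T * set T) : R * R := (io d.1, e d.1 d.2).
have code_inj : forall d d', D d -> D d' -> code d = code d' -> d = d'.
  move=> [a s] [a' s'] [/= La hs] [/= La' hs'] [/ioinj-/(_ La La') aa' es]; subst a'.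
  by rewrite (he a La s s' hs hs' es).
pose SA A := [set d | D d /\ lexle Lam lt (tset d.2 d.1) A].
pose Phi A := @tauU R F (@UfC R (code @` SA A)).
have Phi_mono : forall A B, lexle Lam lt A B -> Phi A `<=` Phi B.
  move=> A B h; apply: (tauU_mono HF); apply: UfC_mono.
  move=> _ [d [Dd hd] <-]; exists d => //; split => //; exact: (@lexle_trans _ _ _ G _ _ _ hd h).
have key : forall A B, lexlt Lam lt A B -> Phi A <> Phi B.
  move=> A B [a [La Ba nAa ag]] E.
  have [h1 h2] := lex_key G La Ba nAa ag.
  set s := [set b | A b /\ Lam b /\ lt b a] in h1 h2.
  have Dd : D (a, s) by split => // b [_ [Lb ltb]].
  have SB : SA B (a, s) by split.
  have nC : ~ (code @` SA A) (code (a, s)).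
    move=> [d [Dd' hd] /code_inj] => /(_ Dd' Dd) ed.
    by case: h2; rewrite ed in hd.
  have [U1 U2] := UfC_strict _ _ _ _ (imageP code SB) nC.
  have [t1 t2] := tauU_strict R HF (UfC_nice _ _) U1 U2.
  by apply: t2; rewrite -/(Phi A) E.
exists (Phi @` powset T Lam); split.
- move=> _ _ [A PA <-] [B PB <-].
  by case: (lex_total G A B) => h; [left|right]; exact: Phi_mono.
- move=> _ [A _ <-]; apply: (tauU_LL0 R HF); exact: UfC_nice.
- apply: inj_card_eq => A B /set_mem PA /set_mem PB PhiAB.
  have [eq|neq] := pselect (lexeq Lam A B).
    apply/seteqP; split => x hx.
      by apply/(eq x (PA x hx)).
    by apply/(eq x (PB x hx)).
  case: (lex_total G A B) => -[h|h].
  + by exfalso; exact: key h PhiAB.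
  + by exfalso; exact: neq h.
  + by exfalso; exact: key h (esym PhiAB).
  + by exfalso; apply: neq => b Lb; apply: iff_sym; exact: h.
- by move=> _ [A _ <-]; exact: (tauF_sub HF (UfC_nice _ _)).
Qed.
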